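(* Let $\Sigma\subseteq\mathcal A^{\mathbf N}$ be a one-sided subshift over a finite alphabet $\mathcal A$ and let $F\subseteq\Sigma$ be a finite set with dense orbit. Then for every $n$, the number $e_l(n)$ of words of length $n$ of the language of $\Sigma$ that are not left-prolongable satisfies $e_l(n)\le|F|$.
   Context: $\Sigma$ is closed and invariant under the shift $S$. $F$ has dense orbit if $\bigcup_{\omega\in F}\{S^m\omega:m\ge0\}$ is dense in $\Sigma$. The language $\mathcal L$ of $\Sigma$ is the set of finite words occurring as subwords of elements of $\Sigma$. A word $v\in\mathcal L$ is left-prolongable if $av\in\mathcal L$ for some $a\in\mathcal A$. *)

(* Defs.v *)
From mathcomp Require Import all_boot.
From mathcomp Require Import boolp.
Set Implicit Arguments. Unset Strict Implicit. Unset Printing Implicit Defensive.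

Definition shift (A : Type) (w : nat -> A) : nat -> A := fun i => w i.+1.

(* Convergence in the product topology of A^N (A discrete):
   u_k --> w iff for every N, eventually u_k agrees with w on [0, N). *)
Definition seq_converges (A : Type) (u : nat -> nat -> A) (w : nat -> A) : Prop :=
  forall N, exists K, forall k, K <= k -> forall i, i < N -> u k i = w i.

(* Closed subset of A^N (A^N is metrizable, so sequential closedness is closedness). *)
Definition closed_set (A : Type) (Sigma : (nat -> A) -> Prop) : Prop :=
  forall (u : nat -> nat -> A) w,
    (forall k, Sigma (u k)) -> seq_converges u w -> Sigma w.

Definition subshift (A : Type) (Sigma : (nat -> A) -> Prop) : Prop :=
  closed_set Sigma /\ (forall w, Sigma w -> Sigma (shift w)).

(* The union of the forward orbits of the F j is dense in Sigma: every basic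
   (cylinder) neighbourhood of a point of Sigma meets it. *)
Definition dense_orbit (A : Type) (Sigma : (nat -> A) -> Prop) (k : nat)
    (F : 'I_k -> nat -> A) : Prop :=
  forall w, Sigma w -> forall N, exists j m, forall i, i < N ->
    iter m (@shift A) (F j) i = w i.

Definition in_language (A : Type) (Sigma : (nat -> A) -> Prop) (v : seq A) : Prop :=
  exists w p, Sigma w /\ v = mkseq (fun i => w (p + i)) (size v).

Definition left_prolongable (A : Type) (Sigma : (nat -> A) -> Prop) (v : seq A) : Prop :=
  exists a : A, in_language Sigma (a :: v).

Definition e_l (A : finType) (Sigma : (nat -> A) -> Prop) (n : nat) : nat :=
  #|[set v : n.-tuple A |
      `[< in_language Sigma (tval v) /\ ~ left_prolongable Sigma (tval v) >]]|.

(* Main.v *)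
Require Import Defs.
From mathcomp Require Import all_boot.
From mathcomp Require Import boolp.
From mathcomp Require Import zify.

Lemma iterE (A : Type) m (f : nat -> A) i : iter m (@shift A) f i = f (m + i).
Proof. elim: m i => [|m IH] i //=. rewrite /shift IH. by rewrite addSnnS. Qed.

Lemma eq_mkseq_lt (A : Type) (f g : nat -> A) n :
  (forall i, i < n -> f i = g i) -> mkseq f n = mkseq g n.
Proof.
move=> H; apply: (@eq_from_nth _ (f 0)); rewrite !size_mkseq // => i Hi.
by rewrite !nth_mkseq // H.
Qed.

Theorem lemma2p15 (A : finType) (Sigma : (nat -> A) -> Prop)
    (k : nat) (F : 'I_k -> nat -> A) :
  subshift Sigma ->
  injective F ->
  (forall j, Sigma (F j)) ->
  dense_orbit Sigma F ->
  forall n : nat, e_l Sigma n <= k.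
Proof.
move=> _ _ HF Hd n.
pose g (j : 'I_k) : n.-tuple A :=
  @Tuple n A (mkseq (F j) n) (introT eqP (size_mkseq _ _)).
rewrite /e_l.
apply: (@leq_trans #|[set g j | j in 'I_k]|); last first.
  by apply: leq_trans (leq_imset_card _ _) _; rewrite card_ord.
apply: subset_leq_card; apply/subsetP => v; rewrite inE => /asboolP [[w [p [Sw Hv]]] Hnp].
rewrite size_tuple in Hv.
have [j [m Hjm]] := Hd w Sw (p + n).
case E: (m + p) => [|q].
  have m0 : m = 0 by lia.
  have p0 : p = 0 by lia.
  subst m p.
  apply/imsetP; exists j => //; apply: val_inj => /=.
  rewrite Hv; apply: eq_mkseq_lt => i Hi /=.
  by rewrite -Hjm.
exfalso; apply: Hnp; exists (F j q); exists (F j), q; split => //.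
rewrite /= size_tuple Hv /mkseq /= addn0; congr cons.
rewrite -/(mkseq _ _) -/(mkseq _ _).
rewrite (iotaDl 1 0 n) -map_comp.
apply: eq_mkseq_lt => i Hi /=.
rewrite -Hjm; last lia.
rewrite iterE; congr (F j _); lia.
Qed.
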